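(* In $\mathrm{OPT}_\tau$, every loop whose entry points lie on $C_{\tau+1}$ (the bottom cover-line of $S_\tau$) either exclusively covers a top segment, or is a cover-line loop. The analogous statement holds for loops with entry points on $C_\tau$ (with bottom segments in place of top segments).
   Context: Instance: vertical line segments in $\mathbb{R}^2$, each of length $1$, with pairwise distinct $x$-coordinates; the minimal bounding box has height $H>3$. A tour is a cyclic sequence of points, each on some segment, with each segment containing one of them; consecutive points are joined by straight legs; cost is total length. $\mathrm{OPT}$ is a fixed oriented minimum-cost tour with no two consecutive points on the same segment and not self-crossing. Cover-lines: horizontal lines $C_1,C_2,\dots$ (top to bottom) spaced $1$ apart, $C_1$ through the bottom tip of the top-most segment; a segment is covered by the top-most cover-line intersecting it. Strip $S_\tau$: closed region between $C_\tau$ and $C_{\tau+1}$; top segments of $S_\tau$: those intersecting $C_\tau$; bottom segments: those covered by $C_{\tau+1}$. $\mathrm{OPT}_\tau$: restriction of $\mathrm{OPT}$ to $S_\tau$ (points added where legs meet the cover-lines), a collection of subpaths each with two entry points on the cover-lines; a loop has both entry points on the same cover-line. A cover-line loop is a loop that enters $S_\tau$ at a point of a cover-line, travels along that cover-line and exits. A segment $s$ in $S_\tau$ is exclusively covered by a path $P$ of $\mathrm{OPT}_\tau$ if $P$ intersects $s$ and no other path of $\mathrm{OPT}_\tau$ intersects $s$. *)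

(* Defs.v *)
From Stdlib Require Import Reals Lra List ZArith.
Open Scope R_scope.

Definition pt : Type := (R * R)%type.

(** A vertical segment of length 1, given by its x-coordinate and the
    y-coordinate of its bottom tip: {(sx, y) | sb <= y <= sb + 1}. *)
Definition seg : Type := (R * R)%type.
Definition sx (s : seg) : R := fst s.
Definition sb (s : seg) : R := snd s.

Definition on_seg (p : pt) (s : seg) : Prop :=
  fst p = sx s /\ sb s <= snd p <= sb s + 1.

Definition bbox_top (I : list seg) : R :=
  match I with
  | nil => 0
  | s :: r => fold_right (fun s' acc => Rmax (sb s' + 1) acc) (sb s + 1) r
  end.
Definition bbox_bot (I : list seg) : R :=
  match I with
  | nil => 0
  | s :: r => fold_right (fun s' acc => Rmin (sb s') acc) (sb s) r
  end.
Definition bbox_height (I : list seg) : R := bbox_top I - bbox_bot I.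

Definition instance (I : list seg) : Prop :=
  I <> nil /\ NoDup (map sx I).

(** Tours: cyclic sequences of points; index arithmetic is modulo length. *)
Definition tpt (T : list pt) (k : nat) : pt := nth (k mod length T) T (0, 0).

Definition is_tour (I : list seg) (T : list pt) : Prop :=
  T <> nil /\
  (forall p, In p T -> exists s, In s I /\ on_seg p s) /\
  (forall s, In s I -> exists p, In p T /\ on_seg p s).

Definition dist (a b : pt) : R :=
  sqrt ((fst a - fst b) ^ 2 + (snd a - snd b) ^ 2).

Definition cost (T : list pt) : R :=
  fold_right Rplus 0
    (map (fun i => dist (tpt T i) (tpt T (S i))) (seq 0 (length T))).

Definition orient (a b c : pt) : R :=
  (fst b - fst a) * (snd c - snd a) - (snd b - snd a) * (fst c - fst a).
Definition legs_cross (a b c d : pt) : Prop :=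
  orient a b c * orient a b d < 0 /\ orient c d a * orient c d b < 0.

Definition non_self_crossing (T : list pt) : Prop :=
  forall i j, (i < length T)%nat -> (j < length T)%nat -> i <> j ->
    ~ legs_cross (tpt T i) (tpt T (S i)) (tpt T j) (tpt T (S j)).

Definition no_consecutive_same_seg (I : list seg) (T : list pt) : Prop :=
  forall i s, (i < length T)%nat -> In s I ->
    ~ (on_seg (tpt T i) s /\ on_seg (tpt T (S i)) s).

Definition is_OPT (I : list seg) (T : list pt) : Prop :=
  is_tour I T /\
  (forall T', is_tour I T' -> cost T <= cost T') /\
  no_consecutive_same_seg I T /\
  non_self_crossing T.

(** The tour as a closed curve, parametrised periodically by t in R with
    period m = length T: curve T (k + s) = (1-s) T_k + s T_{k+1}, 0<=s<1. *)
Definition lerp (a b : pt) (s : R) : pt :=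
  ((1 - s) * fst a + s * fst b, (1 - s) * snd a + s * snd b).

Definition curve (T : list pt) (t : R) : pt :=
  let k := (up t - 1)%Z in
  let idx := Z.to_nat (Z.modulo k (Z.of_nat (length T))) in
  lerp (tpt T idx) (tpt T (S idx)) (t - IZR k).

(** Cover-lines.  C_1 passes through the bottom tip of the top-most segment
    (y = bbox_top I - 1); C_k (k >= 1) is at height c1 - (k - 1). *)
Definition cline_y (I : list seg) (k : nat) : R := bbox_top I - 1 - (INR k - 1).

Definition seg_meets_cline (I : list seg) (k : nat) (s : seg) : Prop :=
  sb s <= cline_y I k <= sb s + 1.

Definition covered_by (I : list seg) (k : nat) (s : seg) : Prop :=
  (1 <= k)%nat /\ seg_meets_cline I k s /\
  forall j, (1 <= j)%nat -> (j < k)%nat -> ~ seg_meets_cline I j s.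

Definition in_strip (I : list seg) (tau : nat) (p : pt) : Prop :=
  cline_y I (S tau) <= snd p <= cline_y I tau.

Definition top_seg (I : list seg) (tau : nat) (s : seg) : Prop :=
  In s I /\ seg_meets_cline I tau s.
Definition bottom_seg (I : list seg) (tau : nat) (s : seg) : Prop :=
  In s I /\ covered_by I (S tau) s.

(** A path of OPT_tau: a maximal closed parameter interval [t1, t1 + d]
    (cyclically, t1 normalised to [0, m)) on which the curve stays in S_tau.
    Its entry points are curve T t1 and curve T (t1 + d). *)
Definition strip_path (I : list seg) (T : list pt) (tau : nat) (t1 d : R) : Prop :=
  0 <= t1 < INR (length T) /\ 0 <= d /\
  (forall u, 0 <= u <= d -> in_strip I tau (curve T (t1 + u))) /\
  (forall eps, 0 < eps -> exists u, 0 < u < eps /\ ~ in_strip I tau (curve T (t1 - u))) /\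
  (forall eps, 0 < eps -> exists u, 0 < u < eps /\ ~ in_strip I tau (curve T (t1 + d + u))).

Definition path_meets (T : list pt) (t1 d : R) (s : seg) : Prop :=
  exists u, 0 <= u <= d /\ on_seg (curve T (t1 + u)) s.

Definition excl_covered (I : list seg) (T : list pt) (tau : nat) (t1 d : R) (s : seg) : Prop :=
  path_meets T t1 d s /\
  forall t1' d', strip_path I T tau t1' d' -> t1' <> t1 -> ~ path_meets T t1' d' s.

Definition loop_on (I : list seg) (T : list pt) (k : nat) (t1 d : R) : Prop :=
  snd (curve T t1) = cline_y I k /\ snd (curve T (t1 + d)) = cline_y I k.

Definition cover_line_loop (I : list seg) (T : list pt) (k : nat) (t1 d : R) : Prop :=
  forall u, 0 <= u <= d -> snd (curve T (t1 + u)) = cline_y I k.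

(* Main.v *)
From Pilot Require Import Defs.
From Stdlib Require Import Reals Lra Lia List ZArith Arith Rgeom Classical ClassicalEpsilon.
Import Pilot.Defs.
Import ListNotations.
Open Scope R_scope.

Lemma dist_nonneg a b : 0 <= dist a b.
Proof. unfold dist; apply sqrt_pos. Qed.

Lemma dist_sym a b : dist a b = dist b a.
Proof. unfold dist; f_equal; ring. Qed.

Lemma dist_tri a b c : dist a c <= dist a b + dist b c.
Proof.
  destruct a as [a1 a2], b as [b1 b2], c as [c1 c2].
  pose proof (triangle a1 a2 c1 c2 b1 b2) as H.
  unfold dist_euc, Rsqr in H. unfold dist; cbn [fst snd].
  replace ((a1 - c1) ^ 2 + (a2 - c2) ^ 2) with ((a1 - c1) * (a1 - c1) + (a2 - c2) * (a2 - c2)) by ring.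
  replace ((a1 - b1) ^ 2 + (a2 - b2) ^ 2) with ((a1 - b1) * (a1 - b1) + (a2 - b2) * (a2 - b2)) by ring.
  replace ((b1 - c1) ^ 2 + (b2 - c2) ^ 2) with ((b1 - c1) * (b1 - c1) + (b2 - c2) * (b2 - c2)) by ring.
  exact H.
Qed.

Lemma dist_lerp a b s s' : dist (lerp a b s) (lerp a b s') = Rabs (s' - s) * dist a b.
Proof.
  unfold dist, lerp; cbn [fst snd].
  replace (((1 - s) * fst a + s * fst b - ((1 - s') * fst a + s' * fst b)) ^ 2 +
   ((1 - s) * snd a + s * snd b - ((1 - s') * snd a + s' * snd b)) ^ 2)
   with (Rsqr (s' - s) * ((fst a - fst b) ^ 2 + (snd a - snd b) ^ 2)) by (unfold Rsqr; ring).
  rewrite sqrt_mult_alt by apply Rle_0_sqr.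
  rewrite sqrt_Rsqr_abs; reflexivity.
Qed.

Lemma lerp0 a b : lerp a b 0 = a.
Proof. destruct a; unfold lerp; simpl; f_equal; ring. Qed.
Lemma lerp1 a b : lerp a b 1 = b.
Proof. destruct b; unfold lerp; simpl; f_equal; ring. Qed.

Definition proj (L : R) (p : pt) : pt := (fst p, L).

Lemma dist_proj_le L a b : dist (proj L a) (proj L b) <= dist a b.
Proof.
  unfold dist, proj; cbn [fst snd]. apply sqrt_le_1_alt.
  replace ((L - L) ^ 2) with 0 by ring. pose proof (pow2_ge_0 (snd a - snd b)). lra.
Qed.

Lemma dist_proj_lt L a b : snd a <> snd b -> dist (proj L a) (proj L b) < dist a b.
Proof.
  intro H. unfold dist, proj; cbn [fst snd]. apply sqrt_lt_1_alt.
  replace ((L - L) ^ 2) with 0 by ring.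
  assert (0 < (snd a - snd b) ^ 2).
  { assert (snd a - snd b <> 0) by lra. replace ((snd a - snd b) ^ 2) with (Rsqr (snd a - snd b)) by (unfold Rsqr; ring). apply Rlt_0_sqr; auto. }
  pose proof (pow2_ge_0 (fst a - fst b)). lra.
Qed.

Lemma proj_id L p : snd p = L -> proj L p = p.
Proof. destruct p; unfold proj; simpl; intros ->; reflexivity. Qed.
Fixpoint pl (l : list pt) : R :=
  match l with
  | a :: ((b :: _) as l') => dist a b + pl l'
  | _ => 0
  end.

Lemma pl_cons2 a b l : pl (a :: b :: l) = dist a b + pl (b :: l).
Proof. reflexivity. Qed.

Lemma pl_nonneg l : 0 <= pl l.
Proof.
  induction l as [|a l IH]; simpl; [lra|].
  destruct l as [|b l']; [lra|]. pose proof (dist_nonneg a b). lra.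
Qed.

Lemma pl_head_tri x z M : pl (x :: M) <= dist x z + pl (z :: M).
Proof.
  destruct M as [|b M].
  - simpl. pose proof (dist_nonneg x z). lra.
  - rewrite !pl_cons2. pose proof (dist_tri x z b). lra.
Qed.

Lemma pl_app l1 x l2 : pl (l1 ++ x :: l2) = pl (l1 ++ [x]) + pl (x :: l2).
Proof.
  induction l1 as [|a l1 IH]; simpl; [lra|].
  destruct l1 as [|b l1].
  - simpl. lra.
  - simpl in IH |- *. rewrite IH. lra.
Qed.

Lemma pl_remove l1 x l2 : pl (l1 ++ l2) <= pl (l1 ++ x :: l2).
Proof.
  induction l1 as [|a l1 IH].
  - simpl. destruct l2 as [|b l2]; simpl.
    + lra.
    + pose proof (dist_nonneg x b). lra.
  - destruct l1 as [|b l1].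
    + simpl. apply pl_head_tri.
    + change (pl (a :: b :: l1 ++ l2) <= pl (a :: b :: l1 ++ x :: l2)).
      rewrite !pl_cons2. simpl in IH |- *. lra.
Qed.

Lemma pl_last l a b : l <> nil -> pl (l ++ [b]) <= pl (l ++ [a]) + dist a b.
Proof.
  intro Hl. induction l as [|c l IH]; [congruence|].
  destruct l as [|d l].
  - simpl. pose proof (dist_tri c a b). lra.
  - change (pl (c :: d :: l ++ [b]) <= pl (c :: d :: l ++ [a]) + dist a b).
    rewrite !pl_cons2. assert (d :: l <> nil) by congruence.
    specialize (IH H). simpl in IH |- *. lra.
Qed.

Lemma pl_cycle h L' e : pl ((h :: L') ++ [h]) <= pl (e :: (h :: L') ++ [e]).
Proof.
  change (pl ((h :: L') ++ [h]) <= pl (e :: h :: L' ++ [e])).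
  rewrite pl_cons2.
  pose proof (pl_last (h :: L') e h ltac:(congruence)).
  rewrite <- !app_comm_cons in H. rewrite <- app_comm_cons. lra.
Qed.

Lemma pl_filter {A} (g : A -> pt) (f : A -> bool) x l r :
  pl (x :: map g (filter f l) ++ r) <= pl (x :: map g l ++ r).
Proof.
  revert x. induction l as [|a l IH]; intro x; simpl; [lra|].
  destruct (f a); simpl.
  - change (dist x (g a) + pl (g a :: map g (filter f l) ++ r) <=
            dist x (g a) + pl (g a :: map g l ++ r)).
    specialize (IH (g a)). lra.
  - change (pl (x :: map g (filter f l) ++ r) <= dist x (g a) + pl (g a :: map g l ++ r)).
    specialize (IH (g a)). pose proof (pl_head_tri x (g a) (map g (filter f l) ++ r)). lra.
Qed.

Lemma pl_proj_le L l : pl (map (proj L) l) <= pl l.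
Proof.
  induction l as [|a l IH]; simpl; [lra|].
  destruct l as [|b l]; simpl; [lra|].
  simpl in IH. pose proof (dist_proj_le L a b). lra.
Qed.

Lemma pl_proj_lt L x l v : In v l -> snd v <> snd x -> pl (map (proj L) (x :: l)) < pl (x :: l).
Proof.
  revert x. induction l as [|a l IH]; intros x Hv Hne; [destruct Hv|].
  change (pl (proj L x :: proj L a :: map (proj L) l) < pl (x :: a :: l)).
  rewrite !pl_cons2.
  destruct (Req_dec (snd a) (snd x)) as [E|E].
  - destruct Hv as [<-|Hv]; [congruence|].
    specialize (IH a Hv ltac:(congruence)). pose proof (dist_proj_le L x a).
    change (map (proj L) (a::l)) with (proj L a :: map (proj L) l) in IH. apply Rplus_le_lt_compat; assumption.
  - pose proof (dist_proj_lt L x a ltac:(congruence)).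
    pose proof (pl_proj_le L (a :: l)). change (map (proj L) (a::l)) with (proj L a :: map (proj L) l) in H0. apply Rplus_lt_le_compat; assumption.
Qed.

Fixpoint sumf (f : nat -> R) (n : nat) : R :=
  match n with O => 0 | S k => sumf f k + f k end.

Lemma fold_seq_sumf f n : fold_right Rplus 0 (map f (seq 0 n)) = sumf f n.
Proof.
  induction n as [|n IH]; [reflexivity|].
  rewrite seq_S, map_app, fold_right_app. simpl.
  rewrite <- IH.
  assert (G : forall l c, fold_right Rplus c l = c + fold_right Rplus 0 l).
  { induction l as [|x l IHl]; intro c; simpl; [lra|]. rewrite IHl. lra. }
  rewrite G. lra.
Qed.

Lemma sumf_ext f g n : (forall i, (i < n)%nat -> f i = g i) -> sumf f n = sumf g n.
Proof.
  induction n as [|n IH]; intro H; simpl; [reflexivity|].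
  rewrite IH by (intros; apply H; lia). rewrite H by lia. reflexivity.
Qed.

Lemma sumf_shift f n : sumf f (S n) = f O + sumf (fun i => f (S i)) n.
Proof. induction n as [|n IH]; simpl in *; [lra|]. rewrite IH. lra. Qed.

Lemma pl_sumf l d0 : pl l = sumf (fun i => dist (nth i l d0) (nth (S i) l d0)) (pred (length l)).
Proof.
  induction l as [|a l IH]; [reflexivity|].
  destruct l as [|b l]; [reflexivity|].
  rewrite pl_cons2, IH. simpl length. simpl pred.
  rewrite sumf_shift. reflexivity.
Qed.

Lemma cost_pl x L : cost (x :: L) = pl ((x :: L) ++ [x]).
Proof.
  unfold cost. rewrite fold_seq_sumf, (pl_sumf _ (0,0)).
  rewrite length_app. simpl length. replace (pred (S (length L) + 1)) with (S (length L)) by lia.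
  apply sumf_ext. intros i Hi. unfold tpt. simpl length.
  rewrite (Nat.mod_small i) by lia.
  rewrite (app_nth1 (x :: L)) by (simpl; lia).
  destruct (Nat.eq_dec (S i) (S (length L))) as [E|E].
  - rewrite E, Nat.Div0.mod_same. 
    rewrite app_nth2 by (simpl; lia). simpl length. rewrite Nat.sub_diag. reflexivity.
  - rewrite Nat.mod_small by lia. rewrite app_nth1 by (simpl; lia). reflexivity.
Qed.

Definition len (T : list pt) (j : nat) : R := dist (tpt T j) (tpt T (S j)).
Definition Sc (T : list pt) (n : nat) : R := sumf (len T) n.
Definition Kf (t : R) : nat := Z.to_nat (up t - 1).
Definition Ff (t : R) : R := t - INR (Kf t).
Definition Af (T : list pt) (t : R) : R := Sc T (Kf t) + Ff t * len T (Kf t).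

Lemma len_nonneg T j : 0 <= len T j.
Proof. apply dist_nonneg. Qed.

Lemma up_add t z : up (t + IZR z) = (up t + z)%Z.
Proof.
  destruct (archimed t) as [H1 H2].
  symmetry. apply tech_up; rewrite plus_IZR; lra.
Qed.

Lemma up_nat n : up (INR n) = (Z.of_nat n + 1)%Z.
Proof.
  symmetry. apply tech_up; rewrite plus_IZR, <- INR_IZR_INZ; simpl; lra.
Qed.

Lemma Kf_IZR t : 0 <= t -> INR (Kf t) = IZR (up t - 1).
Proof.
  intro Ht. destruct (archimed t) as [H1 H2].
  assert (0 < up t)%Z by (apply lt_0_IZR; lra).
  unfold Kf. rewrite INR_IZR_INZ, Z2Nat.id by lia. reflexivity.
Qed.

Lemma Kf_props t : 0 <= t -> INR (Kf t) <= t < INR (Kf t) + 1.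
Proof.
  intro Ht. rewrite Kf_IZR by auto. rewrite minus_IZR.
  destruct (archimed t). simpl. lra.
Qed.

Lemma Kf_unique t k : INR k <= t < INR k + 1 -> Kf t = k.
Proof.
  intro H. unfold Kf.
  assert (E : (Z.of_nat k + 1)%Z = up t).
  { apply tech_up; rewrite plus_IZR, <- INR_IZR_INZ; simpl; lra. }
  rewrite <- E. rewrite Z.add_simpl_r. apply Nat2Z.id.
Qed.

Lemma Ff_range t : 0 <= t -> 0 <= Ff t < 1.
Proof. intro Ht. unfold Ff. pose proof (Kf_props t Ht). lra. Qed.

Lemma tpt_mod T n : length T <> O -> tpt T (n mod length T) = tpt T n.
Proof. intro Hm. unfold tpt. rewrite Nat.Div0.mod_mod. reflexivity. Qed.

Lemma tpt_modS T n : length T <> O -> tpt T (S (n mod length T)) = tpt T (S n).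
Proof.
  intro Hm. unfold tpt. f_equal.
  replace (S (n mod length T)) with (1 + n mod length T)%nat by lia.
  rewrite Nat.Div0.add_mod_idemp_r. f_equal.
Qed.

Lemma tpt_addm T n : tpt T (n + length T) = tpt T n.
Proof.
  unfold tpt. f_equal. destruct (length T) eqn:E.
  - simpl. rewrite Nat.add_0_r. reflexivity.
  - rewrite Nat.Div0.add_mod, Nat.Div0.mod_same, Nat.add_0_r, Nat.Div0.mod_mod. reflexivity.
Qed.

Lemma curve_K T t : length T <> O -> 0 <= t ->
  curve T t = lerp (tpt T (Kf t)) (tpt T (S (Kf t))) (Ff t).
Proof.
  intros Hm Ht. unfold curve, Ff.
  destruct (archimed t) as [H1 H2].
  assert (0 < up t)%Z by (apply lt_0_IZR; lra).
  assert (Ek : (up t - 1)%Z = Z.of_nat (Kf t)) by (unfold Kf; rewrite Z2Nat.id by lia; reflexivity).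
  rewrite Ek, <- Nat2Z.inj_mod, Nat2Z.id, <- INR_IZR_INZ.
  rewrite tpt_mod, tpt_modS by auto. reflexivity.
Qed.

Lemma curve_nat T n : length T <> O -> curve T (INR n) = tpt T n.
Proof.
  intro Hm. rewrite curve_K by (auto; apply pos_INR).
  assert (Kf (INR n) = n) by (apply Kf_unique; lra).
  unfold Ff. rewrite H. replace (INR n - INR n) with 0 by ring. apply lerp0.
Qed.

Lemma curve_leg T t k : length T <> O -> INR k <= t <= INR k + 1 ->
  curve T t = lerp (tpt T k) (tpt T (S k)) (t - INR k).
Proof.
  intros Hm Ht. destruct (Req_dec t (INR k + 1)) as [E|E].
  - rewrite E. rewrite <- S_INR, curve_nat by auto.
    rewrite S_INR. replace (INR k + 1 - INR k) with 1 by ring. rewrite lerp1. reflexivity.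
  - assert (Kf t = k) by (apply Kf_unique; lra).
    rewrite curve_K by (auto; pose proof (pos_INR k); lra).
    unfold Ff. rewrite H. reflexivity.
Qed.

Lemma curve_periodic T t j : curve T (t + IZR j * INR (length T)) = curve T t.
Proof.
  unfold curve. rewrite INR_IZR_INZ, <- mult_IZR, up_add.
  replace (up t + j * Z.of_nat (length T) - 1)%Z with ((up t - 1) + j * Z.of_nat (length T))%Z by ring.
  rewrite Z_mod_plus_full. rewrite plus_IZR. f_equal. ring.
Qed.

Lemma len_periodic T j : len T (j + length T) = len T j.
Proof.
  unfold len. rewrite tpt_addm. replace (S (j + length T)) with (S j + length T)%nat by lia.
  rewrite tpt_addm. reflexivity.
Qed.

Lemma Sc_add T n : Sc T (n + length T) = Sc T n + Sc T (length T).
Proof.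
  unfold Sc. induction n as [|n IH]; simpl; [lra|].
  rewrite IH. pose proof (len_periodic T n). rewrite H. lra.
Qed.

Lemma cost_Sc T : cost T = Sc T (length T).
Proof. unfold cost, Sc. rewrite fold_seq_sumf. reflexivity. Qed.

Lemma dist_nat_le T n n' : (n <= n')%nat -> dist (tpt T n) (tpt T n') <= Sc T n' - Sc T n.
Proof.
  intro H. induction H.
  - unfold dist. replace ((fst (tpt T n) - fst (tpt T n)) ^ 2 + (snd (tpt T n) - snd (tpt T n)) ^ 2) with 0 by ring.
    rewrite sqrt_0. lra.
  - unfold Sc in *. simpl. pose proof (dist_tri (tpt T n) (tpt T m) (tpt T (S m))).
    unfold len in *. lra.
Qed.

Lemma curve_dist_le T p q : length T <> O -> 0 <= p <= q ->
  dist (curve T p) (curve T q) <= Af T q - Af T p.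
Proof.
  intros Hm [Hp Hpq].
  pose proof (Kf_props p Hp) as Kp. pose proof (Kf_props q ltac:(lra)) as Kq.
  rewrite !curve_K by (auto; lra). unfold Af.
  assert (Hle : (Kf p <= Kf q)%nat).
  { destruct (le_lt_dec (Kf p) (Kf q)) as [|Hlt]; auto.
    apply (le_INR (S (Kf q))) in Hlt. rewrite S_INR in Hlt. lra. }
  destruct (Nat.eq_dec (Kf p) (Kf q)) as [E|E].
  - rewrite <- E. rewrite dist_lerp. unfold Ff. rewrite <- E.
    rewrite Rabs_right by lra. unfold len. ring_simplify. lra.
  - assert (S (Kf p) <= Kf q)%nat by lia.
    pose proof (dist_nat_le T _ _ H) as D.
    pose proof (dist_tri (lerp (tpt T (Kf p)) (tpt T (S (Kf p))) (Ff p)) (tpt T (S (Kf p)))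
                  (lerp (tpt T (Kf q)) (tpt T (S (Kf q))) (Ff q))) as T1.
    pose proof (dist_tri (tpt T (S (Kf p))) (tpt T (Kf q))
                  (lerp (tpt T (Kf q)) (tpt T (S (Kf q))) (Ff q))) as T2.
    assert (D1 : dist (lerp (tpt T (Kf p)) (tpt T (S (Kf p))) (Ff p)) (tpt T (S (Kf p)))
       = Rabs (1 - Ff p) * len T (Kf p)).
    { unfold len; rewrite <- dist_lerp, lerp1. reflexivity. }
    assert (D2 : dist (tpt T (Kf q)) (lerp (tpt T (Kf q)) (tpt T (S (Kf q))) (Ff q))
       = Rabs (Ff q - 0) * len T (Kf q)).
    { unfold len; rewrite <- dist_lerp, lerp0. reflexivity. }
    rewrite D1 in T1. rewrite D2 in T2.
    pose proof (Ff_range p Hp). pose proof (Ff_range q ltac:(lra)).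
    rewrite Rabs_right in T1 by lra. rewrite Rabs_right in T2 by lra.
    unfold Sc in D |- *. simpl in D. fold (len T (Kf p)) in D.
    unfold len in *. lra.
Qed.

Lemma Af_periodic T t : 0 <= t -> Af T (t + INR (length T)) = Af T t + Sc T (length T).
Proof.
  intro Ht. pose proof (Kf_props t Ht).
  assert (E : Kf (t + INR (length T)) = (Kf t + length T)%nat).
  { apply Kf_unique. rewrite plus_INR. lra. }
  unfold Af, Ff. rewrite E, len_periodic, Sc_add, plus_INR. ring.
Qed.

Fixpoint ss (l : list R) : Prop :=
  match l with [] => True | x :: l' => (forall y, In y l' -> x <= y) /\ ss l' end.

Lemma ss_app l1 l2 : ss l1 -> ss l2 -> (forall x y, In x l1 -> In y l2 -> x <= y) -> ss (l1 ++ l2).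
Proof.
  induction l1 as [|a l1 IH]; simpl; intros H1 H2 H; auto.
  destruct H1 as [Ha H1]. split.
  - intros y Hy. apply in_app_or in Hy. destruct Hy; auto.
  - apply IH; auto.
Qed.

Lemma ss_map_filter {A} (g : A -> R) (f : A -> bool) l : ss (map g l) -> ss (map g (filter f l)).
Proof.
  induction l as [|a l IH]; simpl; auto. intros [Ha Hl].
  destruct (f a); simpl; auto. split; auto.
  intros y Hy. apply Ha. apply in_map_iff in Hy. destruct Hy as [z [<- Hz]].
  apply in_map. apply filter_In in Hz. tauto.
Qed.

Lemma ss_seq a n : ss (map INR (seq a n)).
Proof.
  revert a. induction n as [|n IH]; intro a; simpl; auto. split; auto.
  intros y Hy. apply in_map_iff in Hy. destruct Hy as [z [<- Hz]].
  apply in_seq in Hz. apply le_INR. lia.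
Qed.

Fixpoint ins (x : R) (l : list R) : list R :=
  match l with
  | [] => [x]
  | y :: l' => if Rle_dec x y then x :: l else y :: ins x l'
  end.

Lemma In_ins x l z : In z (ins x l) <-> z = x \/ In z l.
Proof.
  induction l as [|y l IH]; simpl.
  - intuition congruence.
  - destruct (Rle_dec x y); simpl; rewrite ?IH; intuition congruence.
Qed.

Lemma ss_ins x l : ss l -> ss (ins x l).
Proof.
  induction l as [|y l IH]; simpl; intros H.
  - split; auto. intros _ [].
  - destruct H as [Hy Hl]. destruct (Rle_dec x y) as [E|E]; simpl.
    + split; [|split; auto]. intros z [<-|Hz]; auto. specialize (Hy z Hz). lra.
    + split; auto. intros z Hz. apply In_ins in Hz. destruct Hz as [->|Hz]; auto. lra.
Qed.

Definition sortR (l : list R) : list R := fold_right ins [] l.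

Lemma In_sortR l z : In z (sortR l) <-> In z l.
Proof.
  induction l as [|a l IH]; simpl; [tauto|]. rewrite In_ins, IH. intuition.
Qed.

Lemma ss_sortR l : ss (sortR l).
Proof. induction l; simpl; auto. apply ss_ins; auto. Qed.

Lemma last_cons_indep {A} (l : list A) a d d' : last (a :: l) d = last (a :: l) d'.
Proof. revert a. induction l as [|b l IH]; intro a; [reflexivity|]. simpl. apply (IH b). Qed.

Lemma poly_le T M p : length T <> O -> ss (p :: M) -> 0 <= p ->
  pl (map (curve T) (p :: M)) <= Af T (last (p :: M) p) - Af T p.
Proof.
  intro Hm. revert p. induction M as [|q M IH]; intros p Hs Hp.
  - simpl. lra.
  - destruct Hs as [Hp' Hs].
    assert (p <= q) by (apply Hp'; left; auto).
    change (pl (curve T p :: curve T q :: map (curve T) M) <= Af T (last (q :: M) p) - Af T p).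
    rewrite pl_cons2. rewrite (last_cons_indep M q p q).
    pose proof (curve_dist_le T p q Hm ltac:(lra)).
    specialize (IH q Hs ltac:(lra)). simpl map in IH. lra.
Qed.

Lemma residue m j a : m <> O -> exists i, (a <= i < a + m)%nat /\ i mod m = j mod m.
Proof.
  intro Hm. induction a as [|a IH].
  - exists (j mod m). split; [split; [lia| simpl; apply Nat.mod_upper_bound; auto]|].
    apply Nat.Div0.mod_mod.
  - destruct IH as [i [Hi Hmod]].
    destruct (Nat.eq_dec i a) as [->|E].
    + exists (a + m)%nat. split; [lia|].
      rewrite Nat.Div0.add_mod, Nat.Div0.mod_same, Nat.add_0_r, Nat.Div0.mod_mod. auto.
    + exists i. split; [lia|auto].
Qed.

Lemma choice_list {A B} (P : A -> Prop) (Q : A -> B -> Prop) (l : list A) :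
  (forall s, In s l -> P s -> exists t, Q s t) ->
  exists ts, (forall t, In t ts -> exists s, In s l /\ Q s t) /\
             (forall s, In s l -> P s -> exists t, In t ts /\ Q s t).
Proof.
  induction l as [|x l IH]; intro H.
  - exists nil. split; [intros t []|intros s []].
  - destruct IH as [ts [H1 H2]]. { intros s Hs; apply H; right; auto. }
    destruct (classic (P x)) as [Px|nPx].
    + destruct (H x (or_introl eq_refl) Px) as [t Ht].
      exists (t :: ts). split.
      * intros t' [<-|Ht']; [exists x; split; [left|]; auto|].
        destruct (H1 t' Ht') as [s [Hs Q']]. exists s; split; [right|]; auto.
      * intros s [<-|Hs] Ps; [exists t; split; [left|]; auto|].
        destruct (H2 s Hs Ps) as [t' [Ht' Q']]. exists t'; split; [right|]; auto.
    + exists ts. split.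
      * intros t' Ht'. destruct (H1 t' Ht') as [s [Hs Q']]. exists s; split; [right|]; auto.
      * intros s [<-|Hs] Ps; [contradiction|]. apply H2; auto.
Qed.

Lemma tpt_In T i : length T <> O -> In (tpt T i) T.
Proof. intro Hm. unfold tpt. apply nth_In. apply Nat.mod_upper_bound; auto. Qed.

Lemma up_window t1 i : 0 <= t1 -> t1 < INR i -> (Z.to_nat (up t1) <= i)%nat.
Proof.
  intros H0 H. destruct (archimed t1) as [H1 H2].
  rewrite INR_IZR_INZ in H.
  assert (IZR (up t1) < IZR (Z.of_nat i) + 1) by lra.
  rewrite <- plus_IZR in H3. apply lt_IZR in H3. lia.
Qed.

Lemma INR_up t1 : 0 <= t1 -> INR (Z.to_nat (up t1)) = IZR (up t1).
Proof.
  intro H0. destruct (archimed t1) as [H1 H2].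
  assert (0 < up t1)%Z by (apply lt_0_IZR; lra).
  rewrite INR_IZR_INZ, Z2Nat.id by lia. reflexivity.
Qed.

Lemma witness T L t1 d u : length T <> O -> 0 <= t1 -> 0 <= d ->
  snd (curve T t1) = L -> snd (curve T (t1 + d)) = L -> 0 <= u <= d ->
  snd (curve T (t1 + u)) <> L ->
  exists i, t1 < INR i < t1 + d /\ snd (tpt T i) <> L.
Proof.
  intros Hm Ht1 Hd He1 He2 Hu Hne.
  apply NNPP. intro Hno.
  assert (Hall : forall i, t1 < INR i < t1 + d -> snd (tpt T i) = L).
  { intros i Hi. apply NNPP. intro H. apply Hno. exists i. auto. }
  apply Hne. clear Hne Hno.
  set (p := t1 + u).
  pose proof (Kf_props p ltac:(unfold p; lra)) as Kp.
  set (k := Kf p) in *.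
  set (yA := snd (tpt T k)). set (yB := snd (tpt T (S k))).
  assert (Hy : forall x, INR k <= x <= INR k + 1 -> snd (curve T x) = yA + (x - INR k) * (yB - yA)).
  { intros x Hx. rewrite (curve_leg T x k Hm Hx). unfold lerp, yA, yB. simpl. ring. }
  assert (Hlo : exists lo, INR k <= lo <= p /\ snd (curve T lo) = L).
  { destruct (Rle_dec (INR k) t1) as [E|E].
    - exists t1. unfold p. split; [lra|auto].
    - exists (INR k). split; [lra|].
      destruct (Rlt_dec (INR k) (t1 + d)) as [E2|E2].
      + rewrite curve_nat by auto. apply Hall. lra.
      + assert (INR k = t1 + d) by (unfold p in Kp; lra). rewrite H. auto. }
  assert (Hhi : exists hi, p <= hi <= INR k + 1 /\ snd (curve T hi) = L).
  { destruct (Rle_dec (t1 + d) (INR k + 1)) as [E|E].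
    - exists (t1 + d). unfold p. split; [lra|auto].
    - exists (INR (S k)). rewrite S_INR. split; [lra|].
      rewrite <- S_INR, curve_nat by auto. apply Hall. rewrite S_INR. unfold p in Kp. lra. }
  destruct Hlo as [lo [Hlo1 Hlo2]]. destruct Hhi as [hi [Hhi1 Hhi2]].
  rewrite Hy in Hlo2 by lra. rewrite Hy in Hhi2 by lra. rewrite Hy by lra.
  assert (Z : (hi - lo) * (yB - yA) = 0) by lra.
  apply Rmult_integral in Z. destruct Z as [Z|Z].
  - assert (p = lo) by lra. rewrite <- H in Hlo2. exact Hlo2.
  - assert (yB = yA) by lra. rewrite H in Hlo2 |- *. lra.
Qed.

Lemma core (I : list seg) (T : list pt) (L t1 d : R) :
  is_tour I T ->
  (forall T', is_tour I T' -> cost T <= cost T') ->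
  0 <= t1 < INR (length T) -> 0 <= d < INR (length T) ->
  snd (curve T t1) = L -> snd (curve T (t1 + d)) = L ->
  (forall s s' p, In s I -> In s' I -> on_seg p s -> on_seg p s' -> s = s') ->
  (forall s i, In s I -> t1 < INR i < t1 + d -> on_seg (tpt T i) s ->
     ~ on_seg (proj L (tpt T i)) s ->
     exists t', t1 + d <= t' <= t1 + INR (length T) /\ on_seg (curve T t') s) ->
  forall u, 0 <= u <= d -> snd (curve T (t1 + u)) = L.
Proof.
  intros Htour Hopt Ht1 Hd He1 He2 Huniq Hext u Hu.
  destruct (Req_dec (snd (curve T (t1 + u))) L) as [OK|Hne]; [exact OK|exfalso].
  set (m := length T) in *.
  assert (Hm : m <> O) by (intro E; rewrite E in Ht1; simpl in Ht1; lra).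
  destruct (witness T L t1 d u Hm ltac:(lra) ltac:(lra) He1 He2 Hu Hne) as [iw [Hiw1 Hiw2]].
  set (a := Z.to_nat (up t1)).
  assert (Ha : t1 < INR a <= t1 + 1).
  { unfold a. rewrite INR_up by lra. destruct (archimed t1). lra. }
  set (inb := fun i : nat => if Rlt_dec (INR i) (t1 + d) then true else false).
  set (Ii := filter inb (seq a m)).
  set (Oi := filter (fun i => negb (inb i)) (seq a m)).
  assert (HIi : forall i, In i Ii <-> t1 < INR i < t1 + d).
  { intro i. unfold Ii. rewrite filter_In, in_seq. unfold inb. split.
    - intros [[H1 H2] H3]. destruct (Rlt_dec (INR i) (t1 + d)); [|discriminate].
      split; auto. apply le_INR in H1. lra.
    - intros [H1 H2]. destruct (Rlt_dec (INR i) (t1 + d)); [|contradiction].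
      split; auto. split. apply up_window; lra.
      apply INR_lt. rewrite plus_INR. lra. }
  assert (HOi : forall i, In i Oi -> t1 + d <= INR i <= t1 + INR m).
  { intro i. unfold Oi. rewrite filter_In, in_seq. unfold inb.
    intros [[H1 H2] H3]. destruct (Rlt_dec (INR i) (t1 + d)); [discriminate|].
    split; [lra|]. assert (i + 1 <= a + m)%nat by lia. apply le_INR in H.
    rewrite !plus_INR in H. simpl in H. lra. }
  set (keep := fun i : nat =>
     if excluded_middle_informative
          (forall s, In s I -> on_seg (tpt T i) s -> on_seg (proj L (tpt T i)) s)
     then true else false).
  set (Bad := fun s => exists i, t1 < INR i < t1 + d /\ on_seg (tpt T i) s /\
                             ~ on_seg (proj L (tpt T i)) s).
  destruct (choice_list Bad (fun s t => t1 + d <= t <= t1 + INR m /\ on_seg (curve T t) s) I)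
    as [ts [Hts1 Hts2]].
  { intros s Hs [i [Hi1 [Hi2 Hi3]]]. apply (Hext s i); auto. }
  set (Os := sortR (map INR Oi ++ ts)).
  set (O := map (curve T) Os).
  set (K := map (fun i => proj L (tpt T i)) (filter keep Ii)).
  set (T' := O ++ K).
  assert (HOs : forall t, In t Os -> t1 + d <= t <= t1 + INR m).
  { intros t Ht. unfold Os in Ht. rewrite In_sortR in Ht. apply in_app_or in Ht.
    destruct Ht as [Ht|Ht].
    - apply in_map_iff in Ht. destruct Ht as [i [<- Hi]]. auto.
    - destruct (Hts1 t Ht) as [s [_ [H _]]]. auto. }
  assert (Hcov : forall s, In s I -> exists p, In p T' /\ on_seg p s).
  { intros s Hs. pose proof Htour as Htour0; destruct Htour0 as [_ [_ H3]]. destruct (H3 s Hs) as [q [Hq Hqs]].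
    destruct (In_nth T q (0,0) Hq) as [j [Hj Hjq]].
    destruct (residue m j a Hm) as [i [Hi Hmod]].
    assert (Eq : tpt T i = q).
    { unfold tpt. fold m. rewrite Hmod, Nat.mod_small by auto. auto. }
    destruct (Rlt_dec (INR i) (t1 + d)) as [Lt|Ge].
    - assert (HiI : In i Ii).
      { apply HIi. split; auto. destruct Hi as [Hi _]. apply le_INR in Hi. lra. }
      destruct (excluded_middle_informative
          (forall s, In s I -> on_seg (tpt T i) s -> on_seg (proj L (tpt T i)) s)) as [Kp|nKp].
      + exists (proj L (tpt T i)). split.
        * unfold T'. apply in_or_app. right. unfold K. apply (in_map (fun i => proj L (tpt T i))).
          apply filter_In. split; auto. unfold keep.
          destruct (excluded_middle_informative _); [reflexivity|contradiction].
        * apply Kp; auto. rewrite Eq; auto.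
      + apply not_all_ex_not in nKp. destruct nKp as [s' Hs'].
        apply imply_to_and in Hs'. destruct Hs' as [Hs'I Hs'].
        apply imply_to_and in Hs'. destruct Hs' as [Hon Hnon].
        assert (s' = s) by (apply (Huniq s' s (tpt T i)); auto; rewrite Eq; auto).
        subst s'.
        assert (Bad s) by (exists i; split; [apply HIi; auto|split; auto]).
        destruct (Hts2 s Hs H) as [t [Ht [_ Hon']]].
        exists (curve T t). split; auto.
        unfold T'. apply in_or_app. left. unfold O. apply in_map.
        unfold Os. apply In_sortR. apply in_or_app. right. auto.
    - exists (curve T (INR i)). split.
      + unfold T'. apply in_or_app. left. unfold O. apply in_map.
        unfold Os. apply In_sortR. apply in_or_app. left. apply in_map.
        unfold Oi. apply filter_In. split; [apply in_seq; lia|].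
        unfold inb. destruct (Rlt_dec (INR i) (t1 + d)); [contradiction|reflexivity].
      + rewrite curve_nat by auto. rewrite Eq. auto. }
  assert (Hpts : forall p, In p T' -> exists s, In s I /\ on_seg p s).
  { intros p Hp. pose proof Htour as Htour0; destruct Htour0 as [_ [H2 _]]. unfold T' in Hp. apply in_app_or in Hp.
    destruct Hp as [Hp|Hp].
    - unfold O in Hp. apply in_map_iff in Hp. destruct Hp as [t [<- Ht]].
      unfold Os in Ht. rewrite In_sortR in Ht. apply in_app_or in Ht. destruct Ht as [Ht|Ht].
      + apply in_map_iff in Ht. destruct Ht as [i [<- _]].
        rewrite curve_nat by auto. apply H2. apply tpt_In; auto.
      + destruct (Hts1 t Ht) as [s [Hs [_ Hon]]]. exists s. auto.
    - unfold K in Hp. apply in_map_iff in Hp. destruct Hp as [i [<- Hi]].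
      apply filter_In in Hi. destruct Hi as [_ Hk]. unfold keep in Hk.
      destruct (excluded_middle_informative _) as [Kp|]; [|discriminate].
      destruct (H2 (tpt T i) (tpt_In T i Hm)) as [s [Hs Hon]].
      exists s. split; auto. }
  assert (HI : I <> nil).
  { pose proof Htour as Htour0; destruct Htour0 as [H1 [H2 _]]. destruct T as [|x T0]; [contradiction|].
    destruct (H2 x (or_introl eq_refl)) as [s [Hs _]]. intro E; rewrite E in Hs; destruct Hs. }
  assert (HT'ne : T' <> nil).
  { destruct I as [|s I0]; [contradiction|]. destruct (Hcov s (or_introl eq_refl)) as [p [Hp _]].
    intro E; rewrite E in Hp; destruct Hp. }
  assert (Htour' : is_tour I T') by (split; [|split]; auto).
  specialize (Hopt T' Htour').
  set (e1 := curve T t1). set (e2 := curve T (t1 + d)).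
  assert (Hcost1 : cost T' <= pl (e2 :: O ++ [e1]) + pl (e1 :: K ++ [e2])).
  { destruct T' as [|h rest] eqn:ET'; [contradiction|].
    rewrite cost_pl. eapply Rle_trans; [apply (pl_cycle h rest e2)|].
    rewrite <- ET'. unfold T'.
    replace (e2 :: (O ++ K) ++ [e2]) with ((e2 :: O) ++ K ++ [e2]) by (simpl; rewrite app_assoc; auto).
    eapply Rle_trans; [apply (pl_remove _ e1)|].
    rewrite pl_app. simpl app. lra. }
  assert (Hout : pl (e2 :: O ++ [e1]) <= Af T (t1 + INR m) - Af T (t1 + d)).
  { assert (E1 : e1 = curve T (t1 + INR m)).
    { unfold e1. rewrite <- (curve_periodic T t1 1). f_equal. fold m. ring. }
    replace (e2 :: O ++ [e1]) with (map (curve T) ((t1 + d) :: Os ++ [t1 + INR m]))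
      by (simpl; rewrite map_app; simpl; rewrite <- E1; reflexivity).
    eapply Rle_trans; [apply poly_le; auto; try lra|].
    - simpl. split.
      + intros y Hy. apply in_app_or in Hy. destruct Hy as [Hy|[<-|[]]]; [apply HOs; auto|lra].
      + apply ss_app; [apply ss_sortR|simpl; split; auto; intros _ []|].
        intros x y Hx [<-|[]]. apply HOs; auto.
    - rewrite app_comm_cons, last_last. lra. }
  assert (Hin1 : pl (e1 :: K ++ [e2]) <=
                 pl (map (proj L) (e1 :: map (tpt T) Ii ++ [e2]))).
  { rewrite (map_cons (proj L)), map_app, map_map. simpl map.
    rewrite (proj_id L e1 He1), (proj_id L e2 He2).
    unfold K. apply pl_filter. }
  assert (Hin2 : pl (map (proj L) (e1 :: map (tpt T) Ii ++ [e2])) <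
                 pl (e1 :: map (tpt T) Ii ++ [e2])).
  { apply (pl_proj_lt L e1 _ (tpt T iw)).
    - apply in_or_app. left. apply in_map. apply HIi. auto.
    - unfold e1; rewrite He1. auto. }
  assert (Hin3 : pl (e1 :: map (tpt T) Ii ++ [e2]) <= Af T (t1 + d) - Af T t1).
  { replace (e1 :: map (tpt T) Ii ++ [e2]) with (map (curve T) (t1 :: map INR Ii ++ [t1 + d])).
    2:{ simpl. rewrite map_app, map_map. simpl. f_equal. f_equal.
        apply map_ext. intro i. apply curve_nat; auto. }
    eapply Rle_trans; [apply poly_le; auto; try lra|].
    - simpl. split.
      + intros y Hy. apply in_app_or in Hy. destruct Hy as [Hy|[<-|[]]]; [|lra].
        apply in_map_iff in Hy. destruct Hy as [i [<- Hi]]. apply HIi in Hi. lra.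
      + apply ss_app; [apply ss_map_filter, ss_seq|simpl; split; auto; intros _ []|].
        intros x y Hx [<-|[]]. apply in_map_iff in Hx. destruct Hx as [i [<- Hi]].
        apply HIi in Hi. lra.
    - rewrite app_comm_cons, last_last. lra. }
  pose proof (Af_periodic T t1 ltac:(lra)) as HP. fold m in HP.
  rewrite cost_Sc in Hopt. fold m in Hopt.
  lra.
Qed.

Lemma strip_d_lt I T tau t1 d : strip_path I T tau t1 d -> d < INR (length T).
Proof.
  intros [Ht1 [Hd [Hin [Hl Hr]]]].
  destruct (Rlt_dec d (INR (length T))) as [OK|NO]; auto. exfalso.
  destruct (Hl (INR (length T)) ltac:(lra)) as [v [Hv Hns]].
  apply Hns. rewrite <- (curve_periodic T (t1 - v) 1).
  replace (t1 - v + IZR 1 * INR (length T)) with (t1 + (INR (length T) - v)) by (simpl; ring).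
  apply Hin. lra.
Qed.

Lemma disjoint I T tau t1 d t1' d' u :
  strip_path I T tau t1 d -> strip_path I T tau t1' d' -> t1' <> t1 -> 0 <= u <= d' ->
  exists t', t1 + d <= t' <= t1 + INR (length T) /\ curve T t' = curve T (t1' + u).
Proof.
  intros HP HP' Hne Hu.
  pose proof HP as [Ht1 [Hd [Hin [Hl Hr]]]].
  pose proof HP' as [Ht1' [Hd' [Hin' [Hl' Hr']]]].
  set (m := INR (length T)) in *.
  assert (Hm : 0 < m) by lra.
  set (x := t1' + u).
  set (r := (x - t1) / m).
  destruct (archimed r) as [Ha1 Ha2].
  set (z := up r) in *.
  set (j := (1 - z)%Z).
  assert (Er : x - t1 = r * m) by (unfold r; field; lra).
  assert (B1 : (IZR z - 1) * m <= r * m) by (apply Rmult_le_compat_r; lra).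
  assert (B2 : r * m < IZR z * m) by (apply Rmult_lt_compat_r; lra).
  set (a0 := t1' + IZR j * m).
  assert (Ej : IZR j = 1 - IZR z) by (unfold j; rewrite minus_IZR; reflexivity).
  assert (Hx' : t1 <= a0 + u < t1 + m).
  { unfold a0. rewrite Ej. unfold x in Er. nra. }
  assert (Ecur : forall w, curve T (t1' + w) = curve T (a0 + w)).
  { intro w. unfold a0. rewrite <- (curve_periodic T (t1' + w) j). f_equal. fold m. ring. }
  destruct (Rle_dec (t1 + d) (a0 + u)) as [Ge|Lt].
  { exists (a0 + u). split; [lra|]. unfold x. rewrite (Ecur u). reflexivity. }
  exfalso.
  destruct (total_order_T a0 t1) as [[Lt0|Eq0]|Gt0].
  - destruct (Hl (t1 - a0) ltac:(lra)) as [v [Hv Hns]].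
    apply Hns. replace (t1 - v) with (a0 + (t1 - v - a0)) by ring.
    rewrite <- Ecur. apply Hin'. lra.
  - assert (Hj : IZR j * m = t1 - t1') by (unfold a0 in Eq0; lra).
    assert (IZR j < 1).
    { apply (Rmult_lt_reg_r m); auto. lra. }
    assert (-1 < IZR j).
    { apply (Rmult_lt_reg_r m); auto. lra. }
    apply lt_IZR in H. apply lt_IZR in H0.
    assert (j = 0%Z) by lia. rewrite H1 in Hj. simpl in Hj. apply Hne. lra.
  - destruct (Hl' (a0 - t1) ltac:(lra)) as [v [Hv Hns]].
    apply Hns. replace (t1' - v) with (t1' + - v) by ring. rewrite Ecur.
    replace (a0 + - v) with (t1 + (a0 - v - t1)) by ring. apply Hin. lra.
Qed.

Lemma NoDup_map_inj {A B} (f : A -> B) l x y :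
  NoDup (map f l) -> In x l -> In y l -> f x = f y -> x = y.
Proof.
  induction l as [|a l IH]; intros Hn Hx Hy E; [destruct Hx|].
  simpl in Hn. apply NoDup_cons_iff in Hn. destruct Hn as [Hna Hn].
  destruct Hx as [<-|Hx]; destruct Hy as [<-|Hy]; auto.
  - exfalso. apply Hna. rewrite E. apply in_map; auto.
  - exfalso. apply Hna. rewrite <- E. apply in_map; auto.
Qed.

Lemma part (I : list seg) (T : list pt) (tau : nat) (t1 d L : R) (Good : seg -> Prop) :
  instance I -> is_OPT I T -> strip_path I T tau t1 d ->
  snd (curve T t1) = L -> snd (curve T (t1 + d)) = L ->
  (forall s p, In s I -> on_seg p s -> in_strip I tau p -> ~ (sb s <= L <= sb s + 1) -> Good s) ->
  (exists s, Good s /\ excl_covered I T tau t1 d s) \/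
  (forall u, 0 <= u <= d -> snd (curve T (t1 + u)) = L).
Proof.
  intros Hinst Hopt HP He1 He2 HG.
  destruct (classic (exists s, Good s /\ excl_covered I T tau t1 d s)) as [Y|N]; [left; auto|right].
  destruct Hopt as [Htour [Hmin _]].
  pose proof HP as [Ht1 [Hd [Hin [Hl Hr]]]].
  assert (Hm : length T <> O) by (intro E; rewrite E in Ht1; simpl in Ht1; lra).
  apply (core I T L t1 d Htour Hmin); auto.
  - split; auto. apply (strip_d_lt I T tau t1 d HP).
  - intros s s' p Hs Hs' [E1 _] [E2 _]. destruct Hinst as [_ Hnd].
    apply (NoDup_map_inj sx I); auto. unfold sx in *. congruence.
  - intros s i Hs Hi Hon Hnon.
    assert (HnL : ~ (sb s <= L <= sb s + 1)).
    { intro HL. apply Hnon. destruct Hon as [Hx _]. unfold proj. split; simpl; auto. }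
    assert (Hcurve : tpt T i = curve T (t1 + (INR i - t1))).
    { replace (t1 + (INR i - t1)) with (INR i) by ring. rewrite curve_nat; auto. }
    assert (Hstrip : in_strip I tau (tpt T i)) by (rewrite Hcurve; apply Hin; lra).
    assert (Gs : Good s) by (apply (HG s (tpt T i)); auto).
    assert (Hpm : path_meets T t1 d s) by (exists (INR i - t1); split; [lra|rewrite <- Hcurve; auto]).
    assert (Hnex : ~ excl_covered I T tau t1 d s) by (intro E; apply N; exists s; auto).
    unfold excl_covered in Hnex.
    assert (H' : ~ (forall t1' d', strip_path I T tau t1' d' -> t1' <> t1 -> ~ path_meets T t1' d' s))
      by tauto.
    apply not_all_ex_not in H'. destruct H' as [t1' H'].
    apply not_all_ex_not in H'. destruct H' as [d' H'].
    apply imply_to_and in H'. destruct H' as [HP' H'].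
    apply imply_to_and in H'. destruct H' as [Hne H'].
    apply NNPP in H'. destruct H' as [u' [Hu' Hon']].
    destruct (disjoint I T tau t1 d t1' d' u' HP HP' Hne Hu') as [t' [Ht' Ec]].
    exists t'. split; auto. rewrite Ec. auto.
Qed.

Lemma cline_S I k : cline_y I (S k) = cline_y I k - 1.
Proof. unfold cline_y. rewrite S_INR. ring. Qed.

Theorem lemma19 (I : list seg) (T : list pt) (tau : nat) :
  instance I -> bbox_height I > 3 -> is_OPT I T -> (1 <= tau)%nat ->
  (forall t1 d, strip_path I T tau t1 d -> loop_on I T (S tau) t1 d ->
     (exists s, top_seg I tau s /\ excl_covered I T tau t1 d s)
     \/ cover_line_loop I T (S tau) t1 d) /\
  (forall t1 d, strip_path I T tau t1 d -> loop_on I T tau t1 d ->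
     (exists s, bottom_seg I tau s /\ excl_covered I T tau t1 d s)
     \/ cover_line_loop I T tau t1 d).
Proof.
  intros Hinst _ Hopt Htau. split.
  - intros t1 d HP [He1 He2].
    apply (part I T tau t1 d (cline_y I (S tau)) (top_seg I tau)); auto.
    intros s p Hs [Hx Hy] [Hs1 Hs2] HnL. split; auto. unfold seg_meets_cline.
    rewrite cline_S in *. lra.
  - intros t1 d HP [He1 He2].
    apply (part I T tau t1 d (cline_y I tau) (bottom_seg I tau)); auto.
    intros s p Hs [Hx Hy] [Hs1 Hs2] HnL. split; auto.
    rewrite cline_S in *.
    split; [lia|split].
    + unfold seg_meets_cline. rewrite cline_S. lra.
    + intros j Hj1 Hj2 Hmeet. unfold seg_meets_cline in Hmeet.
      assert (INR j <= INR tau) by (apply le_INR; lia).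
      unfold cline_y in *. lra.
Qed.
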